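(* The space $(\mathbb{R}^{n_1+n_2},d)$ is complete: every sequence $(x_n)$ in $\mathbb{R}^{n_1+n_2}$ with $\lim_{n,m\to\infty}d(x_n,x_m)=0$ has a limit $x\in\mathbb{R}^{n_1+n_2}$ with $\lim_{n\to\infty}d(x_n,x)=0$.
   Context: Fix integers $n_1,n_2\ge1$ and $\varkappa\in\mathbb{N}_+$, and write $x=(x',x'')\in\mathbb{R}^{n_1}\times\mathbb{R}^{n_2}$. Define $d(x,y)=|x'-y'|+\min\left\{\frac{|x''-y''|}{(|x'|+|y'|)^{\varkappa}},\,|x''-y''|^{1/(1+\varkappa)}\right\}$ (with the first entry of the minimum interpreted as $+\infty$ when $|x'|+|y'|=0$ and $x''\neq y''$), where $|\cdot|$ is the Euclidean norm. *)

(* Defs.v *)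
From HB Require Import structures.
From mathcomp Require Import all_boot all_order all_algebra.
From mathcomp Require Import all_classical all_reals all_analysis.
Set Implicit Arguments. Unset Strict Implicit. Unset Printing Implicit Defensive.
Import Order.TTheory GRing.Theory Num.Theory.
Local Open Scope ring_scope.

Definition enorm (R : realType) (n : nat) (v : 'rV[R]_n) : R :=
  Num.sqrt (\sum_(i < n) v ord0 i ^+ 2).

Definition dist_k (R : realType) (n1 n2 kappa : nat)
    (x y : 'rV[R]_n1 * 'rV[R]_n2) : R :=
  let a := enorm (x.1 - y.1) in
  let b := enorm (x.2 - y.2) in
  let s := enorm x.1 + enorm y.1 in
  let root := powR b (1 + kappa%:R)^-1 in
  a + (if s == 0 then root   (* first entry of min is +oo (or irrelevant when b = 0) *)
       else Num.min (b / s ^+ kappa) root).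

(* Main.v *)
Require Import Defs.
From HB Require Import structures.
From mathcomp Require Import all_boot all_order all_algebra.
From mathcomp Require Import all_classical all_reals all_analysis.
From mathcomp Require Import lra.
Import Order.TTheory GRing.Theory Num.Theory.
Local Open Scope classical_set_scope.
Local Open Scope ring_scope.
Set Implicit Arguments. Unset Strict Implicit.

Section H.
Variable R : realType.

Definition Ecv (v : nat -> R) l := forall e : R, 0 < e -> exists N, forall n, (N <= n)%N -> `|v n - l| < e.

Lemma cauchy_lim (v : nat -> R) :
  (forall e : R, 0 < e -> exists N, forall n m, (N <= n)%N -> (N <= m)%N -> `|v n - v m| < e) ->
  Ecv v (lim ((v : nat -> R^o) @ \oo)).
Proof.
move=> H.
have cv : cvg ((v : nat -> R^o) @ \oo).
  apply: cauchy_cvg; apply: cauchy_exP => e e0.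
  have [N HN] := H e e0; exists (v N); exists N => // n /= Nn.
  by rewrite /ball /= HN.
move=> e e0; move/cvgrPdist_lt: cv => /(_ e e0) [N _ HN]; exists N => n Nn.
by rewrite distrC; apply: HN.
Qed.

Lemma enorm_ge0 n (v : 'rV[R]_n) : 0 <= enorm v.
Proof. exact: sqrtr_ge0. Qed.

Lemma coord_le n (v : 'rV[R]_n) i : `|v ord0 i| <= enorm v.
Proof.
rewrite /enorm -sqrtr_sqr ler_sqrt; last by apply: sumr_ge0 => j _; apply: sqr_ge0.
rewrite (bigD1 i) //= lerDl; apply: sumr_ge0 => j _; apply: sqr_ge0.
Qed.

Lemma sum_sq_le (I : Type) (r : seq I) (f : I -> R) : (forall i, 0 <= f i) ->
  \sum_(i <- r) f i ^+ 2 <= (\sum_(i <- r) f i) ^+ 2.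
Proof.
move=> f0; elim: r => [|a r IH]; first by rewrite !big_nil expr0n.
rewrite !big_cons.
have h1 : 0 <= \sum_(i <- r) f i by apply: sumr_ge0 => i _.
have h2 := f0 a.
nra.
Qed.

Lemma enorm_le n (v : 'rV[R]_n) : enorm v <= \sum_i `|v ord0 i|.
Proof.
rewrite /enorm -(ger0_norm (sumr_ge0 _ (fun i _ => normr_ge0 (v ord0 i)))).
rewrite -sqrtr_sqr ler_sqrt; last by apply: sqr_ge0.
under eq_bigr do rewrite -real_normK ?num_real //.
exact: sum_sq_le.
Qed.

Lemma coord_sub n (a b : 'rV[R]_n) i : (a - b) ord0 i = a ord0 i - b ord0 i.
Proof. by rewrite !mxE. Qed.

Lemma enorm_cvg n (w : nat -> 'rV[R]_n) (c : 'rV[R]_n) :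
  (forall i, Ecv (fun k => w k ord0 i) (c ord0 i)) ->
  forall e : R, 0 < e -> exists N, forall k, (N <= k)%N -> enorm (w k - c) < e.
Proof.
move=> H e e0.
set d := e / (n%:R + 1).
have d0 : 0 < d by rewrite divr_gt0 // ltr_wpDl.
have : \forall k \near \oo, forall i, `|w k ord0 i - c ord0 i| < d.
  apply: filter_forall => i; have [N HN] := H i d d0; exists N => //.
move=> [N _ HN]; exists N => k Nk.
apply: le_lt_trans (enorm_le (w k - c)) _.
apply: (@le_lt_trans _ _ (\sum_(i < n) d)).
  by apply: ler_sum => i _; rewrite coord_sub; apply/ltW/HN.
rewrite sumr_const card_ord -mulr_natr /d mulrAC ltr_pdivrMr ?ltr_wpDl //.
by rewrite ltr_pM2l // ltrDl.
Qed.

Variable kappa : nat.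
Let p : R := (1 + kappa%:R)^-1.

Lemma p_gt0 : 0 < p.
Proof. by rewrite /p invr_gt0 ltr_wpDr. Qed.

Lemma p_le1 : p <= 1.
Proof. by rewrite /p invf_le1 ?lerDl ?ltr_wpDr. Qed.

Lemma root_small b e : 0 <= b -> 0 < e -> e <= 1 -> powR b p < e -> b < e.
Proof.
move=> b0 e0 e1 H; rewrite ltNge; apply/negP => eb.
have h1 : powR e p <= powR b p.
  by apply: ge0_ler_powR; [exact: ltW p_gt0| rewrite nnegrE ltW| rewrite nnegrE|].
have h2 : e <= powR e p by apply: ger1_powR; [rewrite e0 e1| exact: p_le1].
by move: H; rewrite ltNge (le_trans h2 h1).
Qed.

Lemma root_le b e : 0 <= b -> 0 < e -> b <= e ^+ kappa.+1 -> powR b p <= e.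
Proof.
move=> b0 e0 be.
apply: (@le_trans _ _ (powR (e ^+ kappa.+1) p)).
  by apply: ge0_ler_powR; [exact: ltW p_gt0| rewrite nnegrE| rewrite nnegrE exprn_ge0 // ltW|].
have hn : (1 + kappa%:R : R) != 0 by rewrite gt_eqF // ltr_wpDr.
have e0' : 0 <= e by apply: ltW.
rewrite -powR_mulrn // -powRrM -nat1r /p mulfV // powRr1 //.
Qed.


Lemma dist_ge n1 n2 (x y : 'rV[R]_n1 * 'rV[R]_n2) :
  enorm (x.1 - y.1) <= dist_k kappa x y.
Proof.
rewrite /dist_k /= lerDl; case: ifP => _; first exact: powR_ge0.
rewrite le_min powR_ge0 andbT; apply: divr_ge0; first exact: enorm_ge0.
by apply: exprn_ge0; apply: addr_ge0; exact: enorm_ge0.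
Qed.

Lemma dist_le n1 n2 (x y : 'rV[R]_n1 * 'rV[R]_n2) :
  dist_k kappa x y <= enorm (x.1 - y.1) + powR (enorm (x.2 - y.2)) p.
Proof.
rewrite /dist_k /= lerD2l; case: ifP => _ //.
by rewrite ge_min lexx orbT.
Qed.

Lemma dist_small n1 n2 (x y : 'rV[R]_n1 * 'rV[R]_n2) e C :
  0 < e -> e <= 1 -> 0 <= C -> enorm x.1 + enorm y.1 <= C ->
  dist_k kappa x y < e -> enorm (x.2 - y.2) < e * (C ^+ kappa + 1).
Proof.
move=> e0 e1 C0 sC.
have hb : 0 <= enorm (x.2 - y.2) by exact: enorm_ge0.
have hK : 1 <= C ^+ kappa + 1 by rewrite lerDr exprn_ge0.
have rc : powR (enorm (x.2 - y.2)) p < e -> enorm (x.2 - y.2) < e * (C ^+ kappa + 1).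
  move=> h; apply: lt_le_trans (root_small hb e0 e1 h) _.
  by apply: ler_peMr => //; apply: ltW.
rewrite /dist_k /= => H.
have hX := le_lt_trans (ler_wpDl (enorm_ge0 _) (lexx _)) H.
move: hX; case: ifP => s0; first exact: rc.
rewrite gt_min => /orP [h|]; last exact: rc.
have s0' : 0 < enorm x.1 + enorm y.1.
  by rewrite lt_def s0 addr_ge0 // enorm_ge0.
move: h; rewrite ltr_pdivrMr ?exprn_gt0 // => h.
apply: lt_le_trans h _; rewrite ler_pM2l //.
have hC : (enorm x.1 + enorm y.1) ^+ kappa <= C ^+ kappa.
  by apply: lerXn2r => //; rewrite nnegrE ?ltW.
by apply: le_trans hC _; rewrite lerDl.
Qed.
End H.

Unset Implicit Arguments. Set Strict Implicit.

Theorem lemma2p1 (R : realType) (n1 n2 kappa : nat)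
  (hn1 : (1 <= n1)%N) (hn2 : (1 <= n2)%N) (hk : (1 <= kappa)%N)
  (u : nat -> 'rV[R]_n1 * 'rV[R]_n2) :
  (forall e : R, 0 < e -> exists N : nat, forall n m : nat,
      (N <= n)%N -> (N <= m)%N -> dist_k kappa (u n) (u m) < e) ->
  exists x : 'rV[R]_n1 * 'rV[R]_n2,
    (fun n => dist_k kappa (u n) x) @ \oo --> (0 : R^o).
Proof.
move=> Hc.
pose c1 : 'rV[R]_n1 := \row_i lim ((fun n => (u n).1 ord0 i : R^o) @ \oo).
have H1 : forall i, Ecv (fun n => (u n).1 ord0 i) (c1 ord0 i).
  move=> i; rewrite mxE; apply: cauchy_lim => e e0.
  have [N HN] := Hc e e0; exists N => n m Nn Nm.
  rewrite -coord_sub; apply: le_lt_trans (coord_le _ _) _.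
  exact: le_lt_trans (dist_ge _ _ _) (HN n m Nn Nm).
pose M := \sum_(i < n1) (`|c1 ord0 i| + 1).
have [N0 HN0] : exists N0, forall n, (N0 <= n)%N -> enorm (u n).1 <= M.
  have : \forall k \near \oo, forall i, `|(u k).1 ord0 i - c1 ord0 i| < 1.
    by apply: filter_forall => i; have [N HN] := H1 i 1 ltr01; exists N.
  move=> [N _ HN]; exists N => n Nn.
  apply: le_trans (enorm_le _) _; apply: ler_sum => i _.
  have := ler_normD (c1 ord0 i) ((u n).1 ord0 i - c1 ord0 i).
  rewrite addrCA subrr addr0 => h; apply: le_trans h _.
  by rewrite lerD2l ltW //; apply: HN.
have M0 : 0 <= M by apply: sumr_ge0 => i _; apply: addr_ge0.
pose K := (M + M) ^+ kappa + 1.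
have K0 : 0 < K by rewrite ltr_wpDl ?exprn_ge0 ?addr_ge0.
pose c2 : 'rV[R]_n2 := \row_i lim ((fun n => (u n).2 ord0 i : R^o) @ \oo).
have H2 : forall i, Ecv (fun n => (u n).2 ord0 i) (c2 ord0 i).
  move=> i; rewrite mxE; apply: cauchy_lim => e e0.
  pose e' := Num.min 1 (e / K).
  have e'0 : 0 < e' by rewrite lt_min ltr01 divr_gt0.
  have [N HN] := Hc e' e'0; exists (maxn N N0) => n m.
  rewrite !geq_max => /andP [Nn N0n] /andP [Nm N0m].
  rewrite -coord_sub; apply: le_lt_trans (coord_le _ _) _.
  have e'1 : e' <= 1 by rewrite ge_min lexx.
  have := @dist_small R kappa _ _ (u n) (u m) e' (M + M) e'0 e'1 (addr_ge0 M0 M0)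
    (lerD (HN0 n N0n) (HN0 m N0m)) (HN n m Nn Nm) => h.
  apply: lt_le_trans h _; rewrite -/K -ler_pdivlMr //.
  by rewrite ge_min lexx orbT.
exists (c1, c2); apply/cvgrPdist_lt => e e0.
have e20 : 0 < e / 2 by rewrite divr_gt0.
have [Na HA] := enorm_cvg H1 e20.
have [Nb HB] := enorm_cvg H2 (exprn_gt0 kappa.+1 e20).
exists (maxn Na Nb) => // n /=; rewrite geq_max => /andP [Nan Nbn].
rewrite sub0r normrN ger0_norm; last exact: le_trans (enorm_ge0 _) (dist_ge _ _ _).
apply: le_lt_trans (dist_le _ _ _) _.
rewrite [e]splitr; apply: ltr_leD; first exact: HA.
apply: root_le; [exact: enorm_ge0 | by [] | exact/ltW/HB].
Qed.
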